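(* Let $m\ge 2$ be an even integer and $k$ an integer with $\gcd(k,m)=1$. Let $\alpha\in\mathbb{F}_{2^m}$, $\alpha\neq 0$, and let $\sigma$ be a field automorphism of $\mathbb{F}_{2^m}$. Define $f:\mathbb{F}_{2^m}^2\to\mathbb{F}_{2^m}^2$ (identifying $\mathbb{F}_{2^m}^2$ additively with $\mathbb{F}_{2^{2m}}$) by $$f(x,y)=\big(x^{2^k+1}+\alpha\,\sigma(y^{2^k+1}),\ xy\big).$$ Then $f$ is APN if and only if $\alpha$ cannot be written as $a^{2^k+1}(t^{2^k}+t)^{1-\sigma}$ with $a,t\in\mathbb{F}_{2^m}$ and $t^{2^k}+t\neq 0$, where $z^{1-\sigma}$ denotes $z/\sigma(z)$ for $z\neq 0$.
   Context: A function $f$ on an elementary abelian $2$-group $V$ (here $V=\mathbb{F}_{2^{2m}}$) is almost perfect nonlinear (APN) if for every $a\neq 0$ and every $b$ the equation $f(x+a)-f(x)=b$ has at most two solutions $x\in V$. *)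

(* Defs.v *)
From HB Require Import structures.
From mathcomp Require Import all_boot all_order all_algebra.
Set Implicit Arguments. Unset Strict Implicit. Unset Printing Implicit Defensive.
Import GRing.Theory.
Local Open Scope ring_scope.

(* Here V = F^2 (additively F_{2^(2m)}) for a finite field F; the group
   structure is the componentwise addition of pairs. *)
Definition APN (F : finFieldType) (f : F * F -> F * F) : Prop :=
  forall a b : F * F, a != 0 ->
    leq #|[set x : F * F | f (x + a) - f x == b]| 2.

Definition fmap (F : finFieldType) (k : nat) (alpha : F) (sigma : F -> F)
  (v : F * F) : F * F :=
  (v.1 ^+ (2 ^ k + 1) + alpha * sigma (v.2 ^+ (2 ^ k + 1)), v.1 * v.2).

(* Main.v *)
Require Import Defs.
From HB Require Import structures.
From mathcomp Require Import all_boot all_order all_algebra all_field.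
From mathcomp Require Import ring.
Set Implicit Arguments. Unset Strict Implicit. Unset Printing Implicit Defensive.
Import GRing.Theory.
Local Open Scope ring_scope.

Section Helpers.
Variable F : finFieldType.
Hypothesis h2 : 2 \in [pchar F].

Lemma frobD k (x y : F) : (x + y) ^+ (2 ^ k) = x ^+ (2 ^ k) + y ^+ (2 ^ k).
Proof.
apply: exprDn_pchar; rewrite pnatX; apply/orP; left.
by rewrite pnatE.
Qed.

Lemma frobN k (x : F) : (- x) ^+ (2 ^ k) = - x ^+ (2 ^ k).
Proof. by rewrite !(oppr_pchar2 h2). Qed.

Lemma fixed01 m k (u : F) : #|F| = (2 ^ m)%N -> coprime k m -> (0 < k)%N ->
  u ^+ (2 ^ k) = u -> u = 0 \/ u = 1.
Proof.
move=> hc hk k0 hu.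
have it : forall n, u ^+ (2 ^ n) = u -> forall j, u ^+ (2 ^ (n * j)) = u.
  move=> n hn; elim=> [|j IH]; first by rewrite muln0 expn0 expr1.
  by rewrite mulnS expnD exprM hn IH.
have hm : u ^+ (2 ^ m) = u by rewrite -hc expf_card.
case: (egcdnP m k0) => km kn heq _.
have : u ^+ 2 = u.
  have := it _ hu km; rewrite mulnC heq (eqP hk) expnD expn1 exprM.
  by rewrite mulnC it.
move=> h.
have : u * (u - 1) == 0 by rewrite mulrBr mulr1 -expr2 h subrr.
rewrite mulf_eq0 subr_eq0 => /orP[/eqP->|/eqP->]; by [left|right].
Qed.

Lemma pfstN (p : F * F) : (- p).1 = - p.1. Proof. by []. Qed.
Lemma psndN (p : F * F) : (- p).2 = - p.2. Proof. by []. Qed.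
Lemma pfstD (p q : F * F) : (p + q).1 = p.1 + q.1. Proof. by []. Qed.
Lemma psndD (p q : F * F) : (p + q).2 = p.2 + q.2. Proof. by []. Qed.

Definition Lin k (alpha : F) (sigma : F -> F) (d w : F * F) : F * F :=
  (w.1 ^+ (2 ^ k) * d.1 + w.1 * d.1 ^+ (2 ^ k)
     + alpha * sigma (w.2 ^+ (2 ^ k) * d.2 + w.2 * d.2 ^+ (2 ^ k)),
   w.1 * d.2 + d.1 * w.2).

Lemma fmapE k alpha (sigma : {rmorphism F -> F}) (d w : F * F) :
  fmap k alpha sigma (w + d) - fmap k alpha sigma w
  = Lin k alpha sigma d w + fmap k alpha sigma d.
Proof.
case: d => a b; case: w => x y.
rewrite /fmap /Lin /=.
rewrite !exprD !expr1 !frobD.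
have hs : sigma ((y ^+ (2 ^ k) + b ^+ (2 ^ k)) * (y + b)) =
   sigma (y ^+ (2 ^ k) * y) + sigma (b ^+ (2 ^ k) * b) +
   sigma (y ^+ (2 ^ k) * b + y * b ^+ (2 ^ k)).
  rewrite -!rmorphD; congr (sigma _); ring.
rewrite hs.
apply: injective_projections; rewrite !(pfstD, psndD, pfstN, psndN) /=; ring.
Qed.

Lemma pfst0 : (0 : F * F).1 = 0. Proof. by []. Qed.
Lemma psnd0 : (0 : F * F).2 = 0. Proof. by []. Qed.

Lemma kernel m k alpha (sigma : {rmorphism F -> F}) :
  #|F| = (2 ^ m)%N -> coprime k m -> (0 < k)%N -> alpha != 0 ->
  ~ (exists a t : F,
        t ^+ (2 ^ k) + t != 0 /\
        alpha = a ^+ (2 ^ k + 1) *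
                ((t ^+ (2 ^ k) + t) / sigma (t ^+ (2 ^ k) + t))) ->
  forall a b x y : F, (a, b) != 0 -> Lin k alpha sigma (a, b) (x, y) = 0 ->
  (x, y) = 0 \/ (x, y) = (a, b).
Proof.
move=> hc hk k0 halpha H a b x y dn0 hL.
have E1 := f_equal fst hL; have E2 := f_equal snd hL.
rewrite pfst0 /= in E1; rewrite psnd0 /= in E2.
have q0 : (0 < 2 ^ k)%N by rewrite expn_gt0.
case: (eqVneq a 0) => [a0|an0].
  subst a.
  have bn0 : b != 0 by apply: contraNneq dn0 => ->; apply/eqP.
  move: E2; rewrite mul0r addr0 => /eqP; rewrite mulf_eq0 (negbTE bn0) orbF.
  move=> /eqP x0; subst x.
  move: E1; rewrite mulr0 mul0r !add0r => /eqP.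
  rewrite mulf_eq0 (negbTE halpha) /= fmorph_eq0 => /eqP E.
  pose u := y / b.
  have yE : y = u * b by rewrite divfK.
  rewrite yE exprMn in E.
  have : b ^+ (2 ^ k) * b * (u ^+ (2 ^ k) + u) = 0 by rewrite -E; ring.
  move/eqP; rewrite mulf_eq0 mulf_eq0 expf_eq0 (negbTE bn0) andbF /=.
  rewrite addr_eq0 (oppr_pchar2 h2) => /eqP /(fixed01 hc hk k0) [u0|u1].
    by left; rewrite yE u0 mul0r.
  by right; rewrite yE u1 mul1r.
have [u xE] : exists u, x = u * a by exists (x / a); rewrite divfK.
have yE : y = u * b.
  have : a * (u * b + y) = 0 by rewrite -E2 xE; ring.
  move/eqP; rewrite mulf_eq0 (negbTE an0) /= addr_eq0 (oppr_pchar2 h2).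
  by move/eqP.
rewrite xE yE !exprMn in E1.
pose z := u ^+ (2 ^ k) + u.
have E1' : a ^+ (2 ^ k) * a * z + alpha * sigma (b ^+ (2 ^ k) * b * z) = 0.
  by rewrite -E1 /z; congr (_ + _ * sigma _); ring.
case: (eqVneq z 0) => [z0|zn0].
  move/eqP: z0; rewrite addr_eq0 (oppr_pchar2 h2) => /eqP /(fixed01 hc hk k0) [u0|u1].
    by left; rewrite xE yE u0 !mul0r.
  by right; rewrite xE yE u1 !mul1r.
case: (eqVneq b 0) => [b0|bn0].
  move: E1'; rewrite b0 mulr0 mul0r rmorph0 mulr0 addr0 => /eqP.
  by rewrite !mulf_eq0 expf_eq0 (negbTE an0) (negbTE zn0) andbF.
exfalso; apply: H; exists (a / sigma b), u; split; first by [].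
have sb0 : sigma b != 0 by rewrite fmorph_eq0.
have sz0 : sigma z != 0 by rewrite fmorph_eq0.
have hE : alpha * (sigma b ^+ (2 ^ k) * sigma b * sigma z) = a ^+ (2 ^ k) * a * z.
  move/eqP: E1'; rewrite addr_eq0 (oppr_pchar2 h2) => /eqP ->.
  by rewrite !rmorphM rmorphXn.
rewrite exprD expr1 expr_div_n -/z.
have -> : alpha = a ^+ (2 ^ k) * a * z / (sigma b ^+ (2 ^ k) * sigma b * sigma z).
  by rewrite -hE mulfK // !mulf_neq0 // expf_neq0.
field.
by rewrite sz0 sb0 expf_neq0.
Qed.

Lemma poppr2 (p : F * F) : - p = p.
Proof. by apply: injective_projections; rewrite ?pfstN ?psndN (oppr_pchar2 h2). Qed.

Lemma LinD k alpha (sigma : {rmorphism F -> F}) d v w :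
  Lin k alpha sigma d (v + w) = Lin k alpha sigma d v + Lin k alpha sigma d w.
Proof.
case: d => a b; case: v => x y; case: w => x' y'.
apply: injective_projections; rewrite /Lin !(pfstD, psndD) /= ?frobD.
  have -> : sigma ((y ^+ (2 ^ k) + y' ^+ (2 ^ k)) * b + (y + y') * b ^+ (2 ^ k))
     = sigma (y ^+ (2 ^ k) * b + y * b ^+ (2 ^ k)) + sigma (y' ^+ (2 ^ k) * b + y' * b ^+ (2 ^ k)).
    by rewrite -rmorphD; congr (sigma _); ring.
  ring.
ring.
Qed.

Lemma Lin_kernel_pt k alpha (sigma : {rmorphism F -> F}) a u :
  a ^+ (2 ^ k) * a * (u ^+ (2 ^ k) + u) = alpha * sigma (u ^+ (2 ^ k) + u) ->
  Lin k alpha sigma (a, 1) (a * u, u) = 0.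
Proof.
move=> hu; apply: injective_projections; rewrite ?pfst0 ?psnd0 /Lin /=.
  rewrite expr1n !mulr1 -hu.
  have -> : (a * u) ^+ (2 ^ k) * a + a * u * a ^+ (2 ^ k)
            = a ^+ (2 ^ k) * a * (u ^+ (2 ^ k) + u) by rewrite exprMn; ring.
  exact: (addrr_pchar2 h2).
by rewrite mulr1 (addrr_pchar2 h2).
Qed.
End Helpers.

Unset Implicit Arguments.

Theorem theorem9 (F : finFieldType) (m k : nat)
  (hcard : #|F| = (2 ^ m)%N) (hm2 : (2 <= m)%N) (hmeven : ~~ odd m)
  (hk : coprime k m)
  (alpha : F) (halpha : alpha != 0)
  (sigma : {rmorphism F -> F}) (hsigma : bijective sigma) :
  APN (fmap k alpha sigma) <->
  ~ (exists a t : F,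
        t ^+ (2 ^ k) + t != 0 /\
        alpha = a ^+ (2 ^ k + 1) *
                ((t ^+ (2 ^ k) + t) / sigma (t ^+ (2 ^ k) + t))).
Proof.
have h2 : 2 \in [pchar F] by apply: (card_finPcharP hcard).
have k0 : (0 < k)%N.
  move: hk; case: k => // ; rewrite /coprime gcd0n => /eqP m1.
  by rewrite m1 in hm2.
have q0 : (0 < 2 ^ k)%N by rewrite expn_gt0.
split.
  move=> hA [a [t [zn0 hal]]].
  have an0 : a != 0.
    by apply: contraNneq halpha => a0; rewrite hal a0 expr0n addn1 /= mul0r.
  have dn0 : (a, 1) != 0 :> F * F.
    apply/eqP => /(f_equal snd); rewrite psnd0 /= => /eqP; by rewrite oner_eq0.
  have := hA (a, 1) (fmap k alpha sigma (a, 1)) dn0.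
  rewrite leqNgt => /negP; apply; apply/card_gt2P.
  have mem : forall u, a ^+ (2 ^ k) * a * (u ^+ (2 ^ k) + u) = alpha * sigma (u ^+ (2 ^ k) + u) ->
     (a * u, u) \in [set x : F * F | fmap k alpha sigma (x + (a, 1)) - fmap k alpha sigma x
                            == fmap k alpha sigma (a, 1)].
    move=> u hu; by rewrite inE (fmapE h2) (Lin_kernel_pt h2 hu) add0r.
  exists (a * 0, 0), (a * 1, 1), (a * t, t); split; first split.
  - by apply: mem; rewrite expr0n eqn0Ngt q0 /= addr0 mulr0 rmorph0 mulr0.
  - by apply: mem; rewrite expr1n (addrr_pchar2 h2) mulr0 rmorph0 mulr0.
  - by apply: mem; rewrite hal -[RHS]mulrA divfK ?fmorph_eq0 // exprD expr1.
  have t0 : t != 0 by apply: contraNneq zn0 => ->; rewrite expr0n eqn0Ngt q0 addr0.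
  have t1 : t != 1 by apply: contraNneq zn0 => ->; rewrite expr1n (addrr_pchar2 h2).
  rewrite !xpair_eqE !negb_and; split.
  - by apply/orP; right; rewrite eq_sym oner_eq0.
  - by apply/orP; right; rewrite eq_sym.
  - by apply/orP; right.
move=> H [a b] c dn0.
set S := [set x | _].
case: (set_0Vmem S) => [->|[x0 hx0]]; first by rewrite cards0.
apply: (@leq_trans #|[set x0; x0 + (a, b)]|); last by rewrite cards2; case: (_ != _).
apply: subset_leq_card; apply/subsetP => x hx.
move: hx hx0; rewrite !inE !(fmapE h2) => /eqP hx /eqP hx0.
have hL : Lin k alpha sigma (a, b) (x + x0) = 0.
  rewrite (LinD h2); have -> : Lin k alpha sigma (a, b) x = Lin k alpha sigma (a, b) x0.
    by apply: (addIr (fmap k alpha sigma (a, b))); rewrite hx hx0.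
  by rewrite -{1}(poppr2 h2 (Lin _ _ _ _ x0)) addNr.
move: hL; case E: (x + x0) => [x' y'] hL.
have := kernel h2 hcard hk k0 halpha H dn0 hL; rewrite -E => -[E0|Ed].
  have -> : x = x0 by rewrite -(addrK x0 x) E0 add0r (poppr2 h2).
  by rewrite eqxx.
have -> : x = x0 + (a, b) by rewrite -(addrK x0 x) Ed (poppr2 h2) addrC.
by rewrite eqxx orbT.
Qed.
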